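(* For every $k\ge 1$, the bi-hypergraph obtained from $\mathcal H_{2k}$ by adding two new vertices $u$ and $v$, removing the edge $\{v_{1,1},v_{1,2},v_{1,3}\}$, and adding the edges $\{u,v_{1,1},v_{1,2}\}$, $\{v,v_{1,2},v_{1,3}\}$, and $\{u,v_{1,j},v_{2k,3-j}\}$ and $\{v,v_{1,j+1},v_{2k,4-j}\}$ for all $j\in[2]$, is minimal uncolorable.
   Context: A bi-hypergraph $\mathcal H=(V,E)$ consists of a finite vertex set $V$ and a set $E$ of subsets of $V$, called edges, with no edge contained in another. A mapping $f:V\to\mathbb N$ is a proper coloring of $\mathcal H$ if $1<|f(e)|<|e|$ for every $e\in E$, where $f(e)=\{f(x):x\in e\}$. $\mathcal H$ is colorable if it has a proper coloring, and uncolorable otherwise. A subhypergraph of $\mathcal H$ is a bi-hypergraph $(V',E')$ with $V'\subseteq V$, $E'\subseteq E$; $\mathcal H$ is minimal uncolorable if it is uncolorable but every proper subhypergraph of it is colorable. For $k\ge 2$, $\mathcal H_k$ is the $3$-uniform bi-hypergraph with vertex set $\{v_{i,j}: i\in[k], j\in[3]\}$ (all distinct), with the convention $v_{i,4}=v_{i,1}$, $v_{i,5}=v_{i,2}$, whose edges are the sets $\{v_{i,1},v_{i,2},v_{i,3}\}$ for all $i\in[k]$ and the sets $\{v_{q+1,j},v_{q,j},v_{q,j+t}\}$ for all $q\in[k-1]$, $j\in[3]$, $t\in\{1,2\}$. *)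

(* Defs.v *)
From mathcomp Require Import all_boot.
Set Implicit Arguments. Unset Strict Implicit. Unset Printing Implicit Defensive.

Section BiHypergraph.
Variable T : finType.

Definition is_bihypergraph (V : {set T}) (E : {set {set T}}) : Prop :=
  (forall e, e \in E -> e \subset V) /\
  (forall e1 e2, e1 \in E -> e2 \in E -> e1 \subset e2 -> e1 = e2).

Definition ncolors (f : T -> nat) (e : {set T}) : nat :=
  size (undup [seq f x | x <- enum e]).

(** f : V -> N is a proper colouring: 1 < |f(e)| < |e| for every edge e.
    (Colourings are given as functions on all of T; values outside V are
    irrelevant since edges lie inside V.) *)
Definition proper_coloring (E : {set {set T}}) (f : T -> nat) : Prop :=
  forall e, e \in E -> 1 < ncolors f e < #|e|.

Definition colorable (V : {set T}) (E : {set {set T}}) : Prop :=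
  exists f : T -> nat, proper_coloring E f.

Definition minimal_uncolorable (V : {set T}) (E : {set {set T}}) : Prop :=
  ~ colorable V E /\
  (forall (V' : {set T}) (E' : {set {set T}}),
      V' \subset V -> E' \subset E -> is_bihypergraph V' E' ->
      (V', E') <> (V, E) -> colorable V' E').

End BiHypergraph.

(** * The hypergraph H_n (n = m.+1 rows) plus two extra vertices u, v.
    Vertex type: inl false = u, inl true = v, inr (i, j) = v_{i+1, j+1}. *)
Definition Vtx (m : nat) : finType := (bool + ('I_m.+1 * 'I_3))%type.

Definition uu {m} : Vtx m := inl false.
Definition vv {m} : Vtx m := inl true.

(** vx i j = v_{i,j} with 1-based indices i in [m+1], j >= 1, and the
    convention v_{i,j+3} = v_{i,j}. *)
Definition vx {m} (i j : nat) : Vtx m := inr (inord i.-1, inord (j.-1 %% 3)).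

Definition rowEdge {m} (i : nat) : {set Vtx m} := [set vx i 1; vx i 2; vx i 3].

Definition linkEdge {m} (q j t : nat) : {set Vtx m} :=
  [set vx q.+1 j; vx q j; vx q (j + t)].

Definition H_edges (m : nat) : {set {set Vtx m}} :=
  [set rowEdge (val i).+1 | i : 'I_m.+1] :|:
  [set linkEdge (val p.1.1).+1 (val p.1.2).+1 (val p.2).+1 | p : ('I_m * 'I_3 * 'I_2)%type].

(** The modified hypergraph, with n = m.+1 rows (the paper takes n = 2k):
    remove {v_{1,1},v_{1,2},v_{1,3}}, add {u,v_{1,1},v_{1,2}}, {v,v_{1,2},v_{1,3}},
    and {u,v_{1,j},v_{n,3-j}}, {v,v_{1,j+1},v_{n,4-j}} for j in [2]. *)
Definition G_edges (m : nat) : {set {set Vtx m}} :=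
  (H_edges m :\ rowEdge 1) :|:
  [set [set uu; vx 1 1; vx 1 2]; [set vv; vx 1 2; vx 1 3]] :|:
  [set [set uu; vx 1 (val j).+1; vx m.+1 (3 - (val j).+1)] | j : 'I_2] :|:
  [set [set vv; vx 1 (val j).+2; vx m.+1 (4 - (val j).+1)] | j : 'I_2].

Definition G_vertices (m : nat) : {set Vtx m} := [set: Vtx m].

(* Main.v *)
Require Import Defs.
From mathcomp Require Import all_boot.
From mathcomp Require Import zify.
Set Implicit Arguments. Unset Strict Implicit. Unset Printing Implicit Defensive.

Definition p3 (a b c : nat) : bool := ~~ ((a == b) && (b == c)) && ~~ [&& a != b, b != c & a != c].
Definition LK x1 x2 x3 y1 y2 y3 : bool :=
  [&& p3 y1 x1 x2, p3 y1 x1 x3, p3 y2 x2 x3, p3 y2 x2 x1, p3 y3 x3 x1 & p3 y3 x3 x2].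
Lemma neq_symF (x y : nat) : (x == y) = false -> (y == x) = false.
Proof. by rewrite eq_sym. Qed.
Lemma nT : ~~ true = false. Proof. by []. Qed.
Lemma nF : ~~ false = true. Proof. by []. Qed.
Ltac dec_step :=
  match goal with
  | H : is_true false |- _ => discriminate H
  | H : (?x == ?x) = false |- _ => by rewrite eqxx in H
  | H : is_true (?x == ?x) |- _ => clear H
  | H : is_true true |- _ => clear H
  | H : is_true (?x == ?y) |- _ => move/eqP: H => H; subst
  | H : is_true (~~ (?x == ?y)) |- _ =>
      let H1 := fresh "Hf" in pose proof (negbTE H) as H1;
      let H2 := fresh "Hf" in pose proof (@neq_symF _ _ H1) as H2; clear H
  | H : is_true (_ && _) |- _ => case/andP: H => ? ?
  | H : is_true (~~ (_ || _)) |- _ => rewrite negb_or in H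
  | H : is_true (~~ ~~ _) |- _ => rewrite negbK in H
  | Hf : (?x == ?y) = false, H : is_true ?b |- _ =>
      match b with context [x == y] => rewrite Hf in H end
  | H : is_true ?b |- _ => match b with context [?x == ?x] => rewrite (eqxx x) in H end
  | H : is_true ?b |- _ => match b with
       | context [?c && false] => rewrite (andbF c) in H
       | context [false && ?c] => rewrite (andFb c) in H
       | context [?c && true] => rewrite (andbT c) in H
       | context [true && ?c] => rewrite (andTb c) in H
       | context [?c || false] => rewrite (orbF c) in H
       | context [false || ?c] => rewrite (orFb c) in H
       | context [?c || true] => rewrite (orbT c) in H
       | context [true || ?c] => rewrite (orTb c) in H
       | context [~~ true] => rewrite nT in H
       | context [~~ false] => rewrite nF in H
       end
  | H : is_true ?b |- _ => match b with context [?x == ?y] => let E := fresh "E" in case: (eqVneq x y) => E; [subst x || subst y | ] end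
  end.
Ltac dec_eq := rewrite /LK /p3; intros; repeat match goal with H : is_true (p3 _ _ _) |- _ => rewrite /p3 in H end;
  try (apply: contraT => ?); repeat dec_step.
Lemma two_step (x1 x2 x3 y1 y2 y3 z1 z2 z3 : nat) :
  p3 x1 x2 x3 -> p3 y1 y2 y3 -> p3 z1 z2 z3 ->
  LK x1 x2 x3 y1 y2 y3 -> LK y1 y2 y3 z1 z2 z3 ->
  [&& z1 == x1, z2 == x2 & z3 == x3].
Proof. dec_eq. Qed.
Lemma final (a1 a2 a3 y1 y2 y3 u v : nat) :
  p3 y1 y2 y3 -> LK a1 a2 a3 y1 y2 y3 ->
  p3 u a1 a2 -> p3 v a2 a3 -> p3 u a1 y2 -> p3 u a2 y1 -> p3 v a2 y3 -> p3 v a3 y2 -> False.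
Proof. dec_eq. Qed.

Lemma ncolors3 (T : finType) (f : T -> nat) (x y z : T) :
  ncolors f [set x; y; z] = size (undup [:: f x; f y; f z]).
Proof.
rewrite /ncolors; apply: perm_size; apply: uniq_perm; rewrite ?undup_uniq //.
move=> w; rewrite !mem_undup; apply/mapP/idP.
  case=> a; rewrite mem_enum !inE -!orbA => Ha ->.
  by case/or3P: Ha => /eqP ->; rewrite eqxx ?orbT.
rewrite !inE => /or3P [] /eqP ->.
- by exists x => //; rewrite mem_enum !inE eqxx.
- by exists y => //; rewrite mem_enum !inE eqxx ?orbT.
- by exists z => //; rewrite mem_enum !inE eqxx ?orbT.
Qed.

Lemma size_undup3 (a b c : nat) : (1 < size (undup [:: a; b; c]) < 3) = p3 a b c.
Proof.
rewrite /p3 /= !inE; case: (eqVneq a b) => [?|?]; subst; try (case: (eqVneq b c) => [?|?]; subst);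
  try (case: (eqVneq a c) => [?|?]; subst); rewrite //= ?eqxx //=; match goal with H : is_true (?x != ?x) |- _ => by rewrite eqxx in H end.
Qed.

Lemma card3 (T : finType) (x y z : T) : x != y -> x != z -> y != z -> #|[set x; y; z]| = 3.
Proof.
move=> xy xz yz.
have -> : [set x; y; z] = [set w in [:: x; y; z]] by apply/setP => w; rewrite !inE orbA.
by rewrite cardsE; apply/card_uniqP; rewrite /= !inE negb_or xy xz yz.
Qed.

Lemma vx_eq m i j i' j' : 0 < i <= m.+1 -> 0 < i' <= m.+1 ->
  (@vx m i j == vx i' j') = (i == i') && (j.-1 %% 3 == j'.-1 %% 3).
Proof.
case: i => [|i] // /andP [_ im]; case: i' => [|i'] // /andP [_ im'].
rewrite /vx (inj_eq (@inr_inj _ _)) xpair_eqE -!val_eqE /= !inordK ?ltn_pmod //.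
Qed.

Inductive cidx := CRow of nat | CLink of nat & nat & nat | CU of nat.

Definition triple_of (m : nat) (c : cidx) : Vtx m * Vtx m * Vtx m :=
 match c with
 | CRow i => (vx i 1, vx i 2, vx i 3)
 | CLink q j t => (vx q.+1 j, vx q j, vx q (j + t))
 | CU k => match k with
    | 0 => (uu, vx 1 1, vx 1 2)
    | 1 => (vv, vx 1 2, vx 1 3)
    | 2 => (uu, vx 1 1, vx m.+1 2)
    | 3 => (uu, vx 1 2, vx m.+1 1)
    | 4 => (vv, vx 1 2, vx m.+1 3)
    | _ => (vv, vx 1 3, vx m.+1 2) end end.

Definition edge_of m c : {set Vtx m} := let: (x, y, z) := triple_of m c in [set x; y; z].
Definition sat m (f : Vtx m -> nat) c : bool := let: (x, y, z) := triple_of m c in p3 (f x) (f y) (f z).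
Definition valid m c : bool :=
  match c with
  | CRow i => 2 <= i <= m.+1
  | CLink q j t => [&& 1 <= q <= m, 1 <= j <= 3 & 1 <= t <= 2]
  | CU k => k < 6
  end.

Lemma valid_distinct m c : 0 < m -> valid m c ->
  let: (x, y, z) := triple_of m c in [&& x != y, x != z & y != z].
Proof.
move=> m0; case: c => [i|q j t|k] /=.
- case/andP=> i2 im.
  have hi : 0 < i <= m.+1 by rewrite im andbT; apply: leq_trans i2.
  by rewrite !vx_eq // eqxx.
- case/and3P=> /andP [q1 qm] /andP [j1 j3] /andP [t1 t2].
  have hq : 0 < q <= m.+1 by rewrite q1 ltnW.
  have hq' : 0 < q.+1 <= m.+1 by [].
  rewrite !vx_eq // eqxx (gtn_eqF (ltnSn q)) /=.
  by case: j j1 j3 => [|[|[|[|]]]] // _ _; case: t t1 t2 => [|[|[|]]] // _ _; rewrite eqxx.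
- have h1 : 0 < 1 <= m.+1 by [].
  have hm : 0 < m.+1 <= m.+1 by rewrite leqnn.
  have n1 : (1 == m.+1) = false by rewrite eqSS eq_sym; move: m0; rewrite lt0n => /negbTE.
  by case: k => [|[|[|[|[|[|k]]]]]] //= _; rewrite ?vx_eq // ?eqxx ?n1.
Qed.

Lemma edge_card m c : 0 < m -> valid m c -> #|edge_of m c| = 3.
Proof.
move=> m0 hv; have := valid_distinct m0 hv; rewrite /edge_of.
case: (triple_of m c) => [[x y] z] /and3P [xy xz yz]; exact: card3.
Qed.

Lemma edge_sat m (f : Vtx m -> nat) c : 0 < m -> valid m c ->
  (1 < ncolors f (edge_of m c) < #|edge_of m c|) = sat f c.
Proof.
move=> m0 hv; rewrite edge_card //; rewrite /edge_of /sat.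
by case: (triple_of m c) => [[x y] z]; rewrite ncolors3 size_undup3.
Qed.

Lemma row1_neq m i : 0 < m -> 2 <= i <= m.+1 -> (@rowEdge m i != rowEdge 1).
Proof.
move=> m0 /andP [i2 im]; apply/negP => /eqP E.
have hi : 0 < i <= m.+1 by rewrite im andbT; apply: leq_trans i2.
have : @vx m i 1 \in rowEdge 1 by rewrite -E /rowEdge !inE eqxx.
by rewrite /rowEdge !inE !vx_eq // (gtn_eqF i2).
Qed.

Lemma link1_neq m q j t : 0 < m -> 1 <= q <= m -> (@linkEdge m q j t != rowEdge 1).
Proof.
move=> m0 /andP [q1 qm]; apply/negP => /eqP E.
have hq : 0 < q.+1 <= m.+1 by [].
have : @vx m q.+1 j \in rowEdge 1 by rewrite -E /linkEdge !inE eqxx.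
have h1 : 0 < 1 <= m.+1 by [].
by rewrite /rowEdge !inE !vx_eq //; case: q q1 {qm hq E}.
Qed.

Lemma edge_in m c : 0 < m -> valid m c -> edge_of m c \in G_edges m.
Proof.
move=> m0; case: c => [i|q j t|k] /=.
- move=> hv; rewrite /G_edges; apply/setUP; left; apply/setUP; left; apply/setUP; left.
  rewrite in_setD1; apply/andP; split; first exact: row1_neq.
  case/andP: hv => i2 im.
  have i0 : 0 < i by apply: leq_trans i2.
  have hi : i.-1 < m.+1 by rewrite prednK.
  by apply/setUP; left; apply/imsetP; exists (Ordinal hi) => //.
- move=> hv; rewrite /G_edges; apply/setUP; left; apply/setUP; left; apply/setUP; left.
  case/and3P: hv => /andP [q1 qm] /andP [j1 j3] /andP [t1 t2].
  rewrite in_setD1; apply/andP; split; first by apply: link1_neq => //; rewrite q1.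
  have hq : q.-1 < m by rewrite prednK.
  have hj : j.-1 < 3 by rewrite prednK.
  have ht : t.-1 < 2 by rewrite prednK.
  apply/setUP; right; apply/imsetP; exists ((Ordinal hq, Ordinal hj), Ordinal ht) => //=.
  by rewrite !prednK.
- rewrite /G_edges /edge_of.
  case: k => [|[|[|[|[|[|k]]]]]] //= _.
  + by apply/setUP; left; apply/setUP; left; apply/setUP; right; rewrite !inE eqxx.
  + by apply/setUP; left; apply/setUP; left; apply/setUP; right; rewrite !inE eqxx orbT.
  + by apply/setUP; left; apply/setUP; right; apply/imsetP; exists (@Ordinal 2 0 isT).
  + by apply/setUP; left; apply/setUP; right; apply/imsetP; exists (@Ordinal 2 1 isT).
  + by apply/setUP; right; apply/imsetP; exists (@Ordinal 2 0 isT).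
  + by apply/setUP; right; apply/imsetP; exists (@Ordinal 2 1 isT).
Qed.

Lemma edge_cases m e : e \in G_edges m -> exists2 c, valid m c & e = edge_of m c.
Proof.
rewrite /G_edges => /setUP [/setUP [/setUP [/setD1P [ne /setUP [/imsetP [i _ E]|/imsetP [[[q j] t] _ ->]]] | /set2P [->|->]] | /imsetP [j _ ->]] | /imsetP [j _ ->]].
- subst e; exists (CRow (val i).+1) => //=.
  rewrite ltn_ord andbT ltnS lt0n; apply/negP => /eqP i0.
  by move: ne; rewrite /= i0 eqxx.
- by exists (CLink (val q).+1 (val j).+1 (val t).+1) => //=; rewrite !ltn_ord.
- by exists (CU 0).
- by exists (CU 1).
- by case: j => [[|[|]]] //= _; [exists (CU 2) | exists (CU 3)].
- by case: j => [[|[|]]] //= _; [exists (CU 4) | exists (CU 5)].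
Qed.

Lemma sat_all m (f : Vtx m -> nat) : 0 < m -> proper_coloring (G_edges m) f ->
  forall c, valid m c -> sat f c.
Proof. by move=> m0 Hf c hv; rewrite -edge_sat //; apply: Hf; apply: edge_in. Qed.

Lemma link_LK m (f : Vtx m -> nat) q : (forall c, valid m c -> sat f c) -> 1 <= q <= m ->
  LK (f (vx q 1)) (f (vx q 2)) (f (vx q 3)) (f (vx q.+1 1)) (f (vx q.+1 2)) (f (vx q.+1 3)).
Proof.
move=> S hq.
have h11 := S (CLink q 1 1); have h12 := S (CLink q 1 2).
have h21 := S (CLink q 2 1); have h22 := S (CLink q 2 2).
have h31 := S (CLink q 3 1); have h32 := S (CLink q 3 2).
rewrite /= hq /= in h11 h12 h21 h22 h31 h32.
rewrite /LK; apply/andP; split; first exact: h11.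
apply/andP; split; first exact: h12.
apply/andP; split; first exact: h21.
apply/andP; split; first exact: (h22 isT).
apply/andP; split; first exact: (h31 isT).
exact: (h32 isT).
Qed.

Lemma row_p3 m (f : Vtx m -> nat) i : (forall c, valid m c -> sat f c) -> 2 <= i <= m.+1 ->
  p3 (f (vx i 1)) (f (vx i 2)) (f (vx i 3)).
Proof. by move=> S hi; apply: (S (CRow i)). Qed.

Lemma uncol m (f : Vtx m -> nat) : 0 < m -> odd m -> proper_coloring (G_edges m) f -> False.
Proof.
move=> m0 om Hf; have S := sat_all m0 Hf.
have Hd : forall d, 2 + d.*2 <= m.+1 ->
   [&& f (vx (2 + d.*2) 1) == f (vx 2 1), f (vx (2 + d.*2) 2) == f (vx 2 2)
     & f (vx (2 + d.*2) 3) == f (vx 2 3)].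
  elim=> [|d IH] hd; first by rewrite !eqxx.
  have hd' : 2 + d.*2 <= m.+1 by apply: leq_trans hd; rewrite leq_add2l leq_double.
  case/and3P: (IH hd') => /eqP e1 /eqP e2 /eqP e3.
  set (i := 2 + d.*2) in *.
  change (2 + d.+1.*2) with i.+2 in hd |- *.
  have hi2 : 2 <= i by rewrite /i leq_addr.
  clearbody i.
  have h0 : 2 <= i <= m.+1 by lia.
  have h1 : 2 <= i.+1 <= m.+1 by lia.
  have h2 : 2 <= i.+2 <= m.+1 by lia.
  have q0 : 1 <= i <= m by lia.
  have q1 : 1 <= i.+1 <= m by lia.
  have := two_step (row_p3 S h0) (row_p3 S h1) (row_p3 S h2) (link_LK S q0) (link_LK S q1).
  by rewrite e1 e2 e3.
have hm : 2 + (m./2).*2 = m.+1.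
  by rewrite -[in RHS](odd_double_half m) om add1n.
have := Hd (m./2); rewrite hm leqnn => /(_ isT) /and3P [/eqP n1 /eqP n2 /eqP n3].
have hU k : k < 6 -> sat f (CU k) by move=> hk; apply: S.
have := hU 0 isT; have := hU 1 isT; have := hU 2 isT; have := hU 3 isT;
have := hU 4 isT; have := hU 5 isT; rewrite /sat /= n1 n2 n3 => u5 u4 u3 u2 u1 u0.
apply: (final _ (link_LK S (_ : 1 <= 1 <= m)) u0 u1 u2 u3 u4 u5).
- by apply: row_p3.
- by rewrite m0.
Qed.

Definition trip := (nat * nat * nat)%type.
Definition comp (x : trip) (j : nat) : nat :=
  match j with 1 => x.1.1 | 2 => x.1.2 | _ => x.2 end.
Definition colf m (T : nat -> trip) (u v : nat) (x : Vtx m) : nat :=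
  match x with inl b => if b then v else u | inr p => comp (T (val p.1).+1) (val p.2).+1 end.

Lemma colf_vx m T u v i j : 0 < i <= m.+1 -> @colf m T u v (vx i j) = comp (T i) (j.-1 %% 3).+1.
Proof.
case: i => [|i] // /andP [_ im]; rewrite /colf /vx /= !inordK //; exact: ltn_pmod.
Qed.
Arguments colf : simpl never.
Arguments vx : simpl never.

Definition row3 (x : trip) := p3 x.1.1 x.1.2 x.2.
Definition linkok (x y : trip) j t := p3 (comp y j) (comp x j) (comp x ((j + t).-1 %% 3).+1).
Definition uvok k u v (x y : trip) :=
  match k with
  | 0 => p3 u (comp x 1) (comp x 2)
  | 1 => p3 v (comp x 2) (comp x 3)
  | 2 => p3 u (comp x 1) (comp y 2)
  | 3 => p3 u (comp x 2) (comp y 1)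
  | 4 => p3 v (comp x 2) (comp y 3)
  | _ => p3 v (comp x 3) (comp y 2)
  end.
Definition csat m (T : nat -> trip) u v c :=
  match c with
  | CRow i => row3 (T i)
  | CLink q j t => linkok (T q) (T q.+1) j t
  | CU k => uvok k u v (T 1) (T m.+1)
  end.

Lemma sat_colf m T u v c : valid m c -> sat (@colf m T u v) c = csat m T u v c.
Proof.
case: c => [i|q j t|k] /=.
- case/andP => i2 im; rewrite /sat /= !colf_vx //; apply/andP; split => //;
  by apply: leq_trans i2.
- case/and3P => /andP [q1 qm] /andP [j1 j3] _.
  have hq : 0 < q <= m.+1 by rewrite q1 ltnW.
  have hq' : 0 < q.+1 <= m.+1 by [].
  rewrite /sat /= !colf_vx //.
  by case: j j1 j3 => [|[|[|[|]]]].
- move=> _; have h1 : 0 < 1 <= m.+1 by [].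
  have hm : 0 < m.+1 <= m.+1 by rewrite leqnn.
  by case: k => [|[|[|[|[|[|k]]]]]]; rewrite /sat /= !colf_vx.
Qed.

Definition jtlist := [:: (1,1); (1,2); (2,1); (2,2); (3,1); (3,2)].
Definition links_except (x y : trip) j0 t0 :=
  all (fun p : nat * nat => ((p.1 == j0) && (p.2 == t0)) || linkok x y p.1 p.2) jtlist.
Definition links_all x y := links_except x y 0 0.
Definition uv_except u v x y k0 := all (fun k => (k == k0) || uvok k u v x y) (iota 0 6).
Definition uv_all u v x y := uv_except u v x y 6.
Definition alt (A1 A0 : trip) := [&& row3 A1, row3 A0, links_all A1 A0 & links_all A0 A1].

Lemma links_exceptP x y j0 t0 j t : links_except x y j0 t0 -> 1 <= j <= 3 -> 1 <= t <= 2 ->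
  ~~ ((j == j0) && (t == t0)) -> linkok x y j t.
Proof.
move=> /allP H hj ht hne; have := H (j, t); rewrite /= (negbTE hne) /=; apply.
by case: j hj {hne} => [|[|[|[|]]]] //; case: t ht => [|[|[|]]].
Qed.

Lemma links_allP x y j t : links_all x y -> 1 <= j <= 3 -> 1 <= t <= 2 -> linkok x y j t.
Proof.
move=> H hj ht; apply: (links_exceptP H hj ht).
by case: j hj.
Qed.

Lemma uv_exceptP u v x y k0 k : uv_except u v x y k0 -> k < 6 -> k != k0 -> uvok k u v x y.
Proof.
move=> /allP H hk hne; have := H k; rewrite (negbTE hne) /=; apply.
by case: k hk {H hne} => [|[|[|[|[|[|]]]]]].
Qed.

Definition Tf q (A1 A0 S B1 B0 : trip) r : trip :=
  if r < q then (if odd r then A1 else A0) else if r == q then S else (if odd r then B1 else B0).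

Lemma fam_ok m q A1 A0 S B1 B0 u v c0 :
  alt A1 A0 -> alt B1 B0 ->
  (2 <= q <= m.+1 -> CRow q <> c0 -> row3 S) ->
  (2 <= q <= m.+1 -> forall j t, 1 <= j <= 3 -> 1 <= t <= 2 -> CLink q.-1 j t <> c0 ->
      linkok (if odd q.-1 then A1 else A0) S j t) ->
  (1 <= q <= m -> forall j t, 1 <= j <= 3 -> 1 <= t <= 2 -> CLink q j t <> c0 ->
      linkok S (if odd q.+1 then B1 else B0) j t) ->
  (forall k, k < 6 -> CU k <> c0 -> uvok k u v (Tf q A1 A0 S B1 B0 1) (Tf q A1 A0 S B1 B0 m.+1)) ->
  forall c, valid m c -> c <> c0 -> csat m (Tf q A1 A0 S B1 B0) u v c.
Proof.
move=> /and4P [rA1 rA0 lA10 lA01] /and4P [rB1 rB0 lB10 lB01] hS hL1 hL2 hU.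
case=> [i|i j t|k] /= hv hne.
- rewrite /Tf; case: ltnP => iq; first by case: (odd i).
  case: eqVneq => [e|ne]; first by subst i; apply: hS.
  by case: (odd i).
- case/and3P: hv => /andP [i1 im] hj ht.
  rewrite /Tf; case: (ltnP i.+1 q) => h1.
    rewrite (ltn_trans (ltnSn i) h1) /=.
    by case: (odd i); apply: links_allP.
  case: (eqVneq i.+1 q) => [e|ne].
    subst q; rewrite ltnSn ?eqxx; apply: hL1 => //; by rewrite ltnS i1.
  have qi : q <= i by rewrite -ltnS ltn_neqAle eq_sym ne h1.
  rewrite ltnNge qi /=.
  case: (eqVneq i q) => [e|ne'].
    subst q; apply: hL2 => //; by rewrite i1.
  by case: (odd i); apply: links_allP.
- by apply: hU.
Qed.

Lemma uv_allP u v x y k : uv_all u v x y -> k < 6 -> uvok k u v x y.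
Proof. move=> H hk; apply: (uv_exceptP H hk); by rewrite neq_ltn hk. Qed.

Record params := Params { pA1 : trip; pA0 : trip; pS : trip; pB1 : trip; pB0 : trip; pu : nat; pv : nat }.

Definition mkL (par : bool) A1 A0 B1 B0 u v := Params A1 A0 (if par then A1 else A0) B1 B0 u v.

Definition lpar (par : bool) (j t : nat) : params :=
 match j, t with
 | 1, 1 => mkL par (0,0,1) (1,1,0) (1,0,0) (0,1,1) 1 0
 | 1, _ => mkL par (0,1,0) (1,0,1) (1,0,0) (0,1,1) 0 0
 | 2, 1 => if par then mkL par (0,1,1) (1,0,0) (0,0,1) (1,1,0) 0 0
           else mkL par (0,0,1) (1,1,0) (0,2,0) (2,0,2) 2 0
 | 2, _ => mkL par (0,0,1) (1,1,0) (0,1,0) (1,0,1) 1 0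
 | 3, 1 => mkL par (0,1,0) (1,0,1) (0,0,1) (1,1,0) 0 0
 | _, _ => if par then mkL par (0,1,0) (1,0,1) (2,2,1) (1,1,2) 0 1
           else mkL par (0,1,1) (1,0,0) (1,1,0) (0,0,1) 1 0
 end.

Definition lcheck (par : bool) j0 t0 (P : params) :=
  [&& alt (pA1 P) (pA0 P), alt (pB1 P) (pB0 P), pS P == (if par then pA1 P else pA0 P),
      links_except (pS P) (if par then pB0 P else pB1 P) j0 t0
    & uv_all (pu P) (pv P) (pA1 P) (pB0 P)].

Lemma lcheck_ok par j t : 1 <= j <= 3 -> 1 <= t <= 2 -> lcheck par j t (lpar par j t).
Proof. by case: par; case: j => [|[|[|[|]]]] //; case: t => [|[|[|]]]. Qed.

Definition rpar (par : bool) : params :=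
  if par then Params (0,0,1) (1,1,0) (0,0,0) (1,1,2) (2,2,1) 2 1
  else Params (0,0,1) (1,1,0) (1,1,1) (2,2,0) (0,0,2) 1 0.

Definition rcheck (par : bool) (P : params) :=
  [&& alt (pA1 P) (pA0 P), alt (pB1 P) (pB0 P),
      links_all (if par then pA0 P else pA1 P) (pS P),
      links_all (pS P) (if par then pB0 P else pB1 P),
      uv_all (pu P) (pv P) (pA1 P) (pB0 P)
    & par || uv_all (pu P) (pv P) (pA1 P) (pS P)].

Lemma rcheck_ok par : rcheck par (rpar par).
Proof. by case: par. Qed.

Definition mkU A1 A0 u v := Params A1 A0 A1 A1 A0 u v.
Definition upar (k : nat) : params :=
  match k with
  | 0 => mkU (0,1,1) (1,0,0) 2 0
  | 1 => mkU (0,0,1) (1,1,0) 1 2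
  | 2 => mkU (0,1,1) (1,0,0) 0 0
  | 3 => mkU (0,1,1) (1,0,0) 1 0
  | 4 => mkU (0,0,1) (1,1,0) 1 0
  | _ => mkU (0,0,1) (1,1,0) 1 1
  end.

Definition ucheck k (P : params) :=
  [&& alt (pA1 P) (pA0 P), alt (pB1 P) (pB0 P) & uv_except (pu P) (pv P) (pA1 P) (pA0 P) k].

Lemma ucheck_ok k : k < 6 -> ucheck k (upar k).
Proof. by case: k => [|[|[|[|[|[|]]]]]]. Qed.

Lemma if_negb (A : Type) (b : bool) (x y : A) : (if ~~ b then x else y) = (if b then y else x).
Proof. by case: b. Qed.

Lemma fix_col m c0 : 0 < m -> odd m -> valid m c0 ->
  exists f : Vtx m -> nat, forall c, valid m c -> c <> c0 -> sat f c.
Proof.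
move=> m0 om; case: c0 => [q0|q0 j0 t0|k0] /= hv.
-
  set P := rpar (odd q0).
  have hc : rcheck (odd q0) P by exact: rcheck_ok.
  case/and3P: hc => hA hB /and4P [hL1 hL2 hU hU'].
  case/andP: hv => q2 qm.
  exists (colf (Tf q0 (pA1 P) (pA0 P) (pS P) (pB1 P) (pB0 P)) (pu P) (pv P)) => c hc hne.
  rewrite sat_colf //; apply: (fam_ok hA hB _ _ _ _ hc hne).
  + by move=> _ H; case: H.
  + move=> _ j t hj ht _.
    have ho : odd q0.-1 = ~~ odd q0 by case: (q0) q2 => [|q] //= _; rewrite negbK.
    by rewrite ho if_negb; apply: links_allP.
  + by move=> _ j t hj ht _ /=; rewrite if_negb; apply: links_allP.
  + move=> k hk _; rewrite /Tf q2 /= ltnNge qm /=.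
    rewrite om /=.
    case: eqVneq => [e|_]; last by apply: uv_allP.
    rewrite -e /= om /= in hU'; by apply: uv_allP.
-
  case/and3P: hv => /andP [q1 qm] hj0 ht0.
  set P := lpar (odd q0) j0 t0.
  have hc : lcheck (odd q0) j0 t0 P by exact: lcheck_ok.
  case/and5P: hc => hA hB /eqP hS hL hU.
  exists (colf (Tf q0 (pA1 P) (pA0 P) (pS P) (pB1 P) (pB0 P)) (pu P) (pv P)) => c hc hne.
  rewrite sat_colf //; apply: (fam_ok hA hB _ _ _ _ hc hne).
  + move=> _ _; rewrite hS; case/and4P: hA => ? ? _ _; by case: (odd q0).
  + move=> hq j t hj ht _.
    have ho : odd q0.-1 = ~~ odd q0.
      by case: (q0) q1 => [|q] //= _; rewrite negbK.
    rewrite ho hS; case/and4P: hA => _ _ h10 h01.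
    by case: (odd q0); apply: links_allP.
  + move=> _ j t hj ht hne' /=; rewrite if_negb.
    apply: (links_exceptP hL hj ht); apply/negP => /andP [/eqP e1 /eqP e2].
    by apply: hne'; rewrite e1 e2.
  + move=> k hk _.
    have -> : Tf q0 (pA1 P) (pA0 P) (pS P) (pB1 P) (pB0 P) 1 = pA1 P.
      rewrite /Tf; case: ltnP => h1 //.
      have e : q0 = 1 by apply/eqP; rewrite eqn_leq h1 q1.
      by rewrite e eqxx hS e.
    have -> : Tf q0 (pA1 P) (pA0 P) (pS P) (pB1 P) (pB0 P) m.+1 = pB0 P.
      rewrite /Tf ltnNge (leq_trans qm (leqnSn _)) /= gtn_eqF ?ltnS //.
      by rewrite /= om.
    by apply: uv_allP.
-
  set P := upar k0.
  have hc : ucheck k0 P by exact: ucheck_ok.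
  case/and3P: hc => hA hB hU.
  exists (colf (Tf m.+2 (pA1 P) (pA0 P) (pS P) (pB1 P) (pB0 P)) (pu P) (pv P)) => c hc hne.
  rewrite sat_colf //; apply: (fam_ok hA hB _ _ _ _ hc hne).
  + by rewrite ltnn andbF.
  + by rewrite ltnn andbF.
  + by move=> /andP [_ h]; exfalso; lia.
  + move=> k hk hk0.
    rewrite /Tf /= ltnS leqnn /= om.
    apply: (uv_exceptP hU hk); apply/eqP => e; apply: hk0; by rewrite e.
Qed.

Lemma vx_val m (i : 'I_m.+1) (j : 'I_3) : @vx m (val i).+1 (val j).+1 = inr (i, j).
Proof. by rewrite /vx /= modn_small ?ltn_ord // !inord_val. Qed.

Lemma cover m (x : Vtx m) : 0 < m -> exists2 c, valid m c & x \in edge_of m c.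
Proof.
move=> m0; case: x => [[]|[i j]].
- by exists (CU 1) => //; rewrite /edge_of /= !inE eqxx.
- by exists (CU 0) => //; rewrite /edge_of /= !inE eqxx.
- rewrite -vx_val; case: (eqVneq (val i) 0) => [i0|i0].
  + exists (CLink 1 (val j).+1 1); first by rewrite /= m0 ltn_ord.
    by rewrite /edge_of /= i0 !inE eqxx orbT.
  + exists (CRow (val i).+1); first by rewrite /= ltnS lt0n i0 ltn_ord.
    rewrite /edge_of /= !inE.
    by case: j => [[|[|[|]]]] //= _; rewrite eqxx ?orbT.
Qed.

Theorem mainTheorem19 (k : nat) (hk : 1 <= k) :
  is_bihypergraph (G_vertices (2 * k).-1) (G_edges (2 * k).-1) /\
  minimal_uncolorable (G_vertices (2 * k).-1) (G_edges (2 * k).-1).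
Proof.
have m0 : 0 < (2 * k).-1 by case: k hk => [|k'] // _; rewrite mulnS.
have om : odd (2 * k).-1 by move: hk {m0}; case: k => [|k'] // _; rewrite mulnS add2n /= mul2n odd_double.
rewrite /G_vertices; move: m0 om; set m := (2 * k).-1 => m0 om.
split.
  split; first by move=> e _; exact: subsetT.
  move=> e1 e2 /edge_cases [c1 h1 ->] /edge_cases [c2 h2 ->] sub.
  by apply/eqP; rewrite eqEcard sub !edge_card.
split.
  by move=> [f Hf]; exact: (uncol m0 om Hf).
move=> V' E' sV sE [hsub hanti] hne.
case: (eqVneq E' (G_edges m)) => [eE|nE].
  exfalso; apply: hne; subst E'; congr pair; apply/eqP; rewrite eqEsubset sV /=.
  apply/subsetP => x _; have [c hc xc] := cover x m0.
  exact: (subsetP (hsub _ (edge_in m0 hc))).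
have : ~~ (G_edges m \subset E') by apply: contra nE => h; rewrite eqEsubset sE h.
case/subsetPn => e eG eE'; case/edge_cases: eG => c0 hv0 ee.
have [f Hf] := fix_col m0 om hv0.
exists f => e' he'.
have : e' \in G_edges m by exact: (subsetP sE _ he').
case/edge_cases => c hc ee'; subst e'.
rewrite edge_sat //; apply: Hf => // Hc; subst c.
by move: eE'; rewrite ee he'.
Qed.
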